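(* Let $L$ be a finite distributive lattice and $x\in L$ a complemented element with complement $x'$. Then $\mathcal C_x(\mathcal J(L))$ is a convex polytope in $\mathbb R^{\mathcal J(L)}$ whose set of vertices (extreme points) is exactly $\mathcal D_x(\mathcal J(L))$.
   Context: $\mathcal J(L)$ is the set of join-irreducible elements of $L$ (elements covering exactly one element) with the induced order; for $y\in L$, $\eta(y):=\{j\in\mathcal J(L): j\le y\}$. Since $x$ is complemented, $\eta(x)$ and $\eta(x')$ partition $\mathcal J(L)$. A map $g$ on $\mathcal J(L)$ is nonincreasing if $j\le j'$ implies $g(j)\ge g(j')$. $\mathcal D_x(\mathcal J(L))$ is the set of maps $\xi:\mathcal J(L)\to\{-1,0,1\}$ such that $|\xi|$ is nonincreasing, $\xi(j)\ge0$ for $j\in\eta(x)$ and $\xi(j)\le0$ for $j\in\eta(x')$. $\mathcal C_x(\mathcal J(L))$ is the set of maps $f:\mathcal J(L)\to[-1,1]$ such that $|f|$ is nonincreasing, $f(j)\ge0$ for $j\in\eta(x)$ and $f(j)\le 0$ for $j\in\eta(x')$. *)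

(* Defs.v *)
From HB Require Import structures.
From mathcomp Require Import all_boot all_order all_algebra.
Set Implicit Arguments. Unset Strict Implicit. Unset Printing Implicit Defensive.
Import Order.TTheory GRing.Theory Num.Theory.

Definition covers (d : Order.disp_t) (L : finPOrderType d) (a b : L) : bool :=
  ((a < b)%O && [forall z : L, ~~ ((a < z)%O && (z < b)%O)]).

Definition join_irr (d : Order.disp_t) (L : finPOrderType d) (j : L) : bool :=
  #|[pred y : L | covers y j]| == 1%N.

(* J(L) as a finite type (order on it is the induced order, via val) *)
Definition JL (d : Order.disp_t) (L : finPOrderType d) := {j : L | join_irr j}.

Definition complement_of (d : Order.disp_t) (L : finTBDistrLatticeType d) (x x' : L) : Prop :=
  (x `&` x')%O = \bot%O /\ (x `|` x')%O = \top%O.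

Local Open Scope ring_scope.

Definition abs_nonincr (d : Order.disp_t) (L : finPOrderType d) (R : realFieldType)
  (g : JL L -> R) : Prop :=
  forall j j' : JL L, (val j <= val j')%O -> `|g j'| <= `|g j|.

Definition sign_cond (d : Order.disp_t) (L : finTBDistrLatticeType d) (R : realFieldType)
  (x x' : L) (g : JL L -> R) : Prop :=
  (forall j : JL L, (val j <= x)%O -> 0 <= g j) /\
  (forall j : JL L, (val j <= x')%O -> g j <= 0).

Definition in_Dx (d : Order.disp_t) (L : finTBDistrLatticeType d) (R : realFieldType)
  (x x' : L) (g : JL L -> R) : Prop :=
  (forall j, g j = -1 \/ g j = 0 \/ g j = 1) /\ abs_nonincr g /\ sign_cond x x' g.

Definition in_Cx (d : Order.disp_t) (L : finTBDistrLatticeType d) (R : realFieldType)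
  (x x' : L) (g : JL L -> R) : Prop :=
  (forall j, -1 <= g j <= 1) /\ abs_nonincr g /\ sign_cond x x' g.

Definition in_conv_hull (T : finType) (R : realFieldType) (n : nat)
  (s : 'I_n -> T -> R) (f : T -> R) : Prop :=
  exists w : 'I_n -> R, (forall i, 0 <= w i) /\ \sum_(i < n) w i = 1 /\
    forall t, f t = \sum_(i < n) w i * s i t.

Definition is_convex_polytope (T : finType) (R : realFieldType) (C : (T -> R) -> Prop) : Prop :=
  exists (n : nat) (s : 'I_n -> T -> R), forall f, C f <-> in_conv_hull s f.

Definition extreme_point (T : finType) (R : realFieldType) (C : (T -> R) -> Prop)
  (f : T -> R) : Prop :=
  C f /\ forall (g h : T -> R) (t : R), C g -> C h -> 0 < t < 1 ->
    (forall u, f u = t * g u + (1 - t) * h u) -> forall u, g u = f u /\ h u = f u.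

(* Main.v *)
Require Import Defs.
From HB Require Import structures.
From mathcomp Require Import all_boot all_order all_algebra.
Import Order.TTheory GRing.Theory Num.Theory.
From Stdlib Require Import ClassicalEpsilon FunctionalExtensionality.
Set Implicit Arguments. Unset Strict Implicit. Unset Printing Implicit Defensive.

Lemma below_cover (d : Order.disp_t) (L : finTBDistrLatticeType d) (j : L) :
  forall n y, (#|[pred w : L | (y < w)%O && (w < j)%O]| <= n)%N -> (y < j)%O ->
  exists z, covers z j && (y <= z)%O.
Proof.
elim=> [|n IH] y Hn Hyj.
  exists y; rewrite /covers Hyj lexx andbT /=; apply/forallP => z; apply/negP => Hz.
  by move: Hn; rewrite leqn0 => /eqP/card0_eq/(_ z); rewrite inE Hz.
case: (boolP [exists w, (y < w)%O && (w < j)%O]).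
  case/existsP => w /andP[Hyw Hwj].
  have [|z /andP[Hz Hwz]] := IH w _ Hwj.
    rewrite -ltnS; apply: leq_trans Hn; apply: proper_card; apply/properP; split.
      apply/subsetP => u; rewrite !inE => /andP[Hwu ->]; by rewrite (lt_trans Hyw Hwu).
    by exists w; rewrite !inE ?Hyw ?Hwj ?ltxx.
  by exists z; rewrite Hz (le_trans (ltW Hyw) Hwz).
move=> Hn'; exists y; rewrite /covers Hyj lexx andbT /=; apply/forallP => z.
by apply/negP => Hz; move/negP: Hn'; apply; apply/existsP; exists z.
Qed.

Lemma join_prime (d : Order.disp_t) (L : finTBDistrLatticeType d) (j a b : L) :
  join_irr j -> (j <= a `|` b)%O -> (j <= a)%O || (j <= b)%O.
Proof.
move=> Hj Hab; apply/negPn/negP; rewrite negb_or => /andP[Ha Hb].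
have lt1 : (j `&` a < j)%O by rewrite lt_neqAle leIl andbT; apply: contra Ha => /eqP <-; rewrite leIr.
have lt2 : (j `&` b < j)%O by rewrite lt_neqAle leIl andbT; apply: contra Hb => /eqP <-; rewrite leIr.
have [z1 /andP[Hz1 H1]] := @below_cover d L j _ _ (leqnn _) lt1.
have [z2 /andP[Hz2 H2]] := @below_cover d L j _ _ (leqnn _) lt2.
have Hc : (#|[pred y : L | covers y j]| <= 1)%N by move: Hj => /eqP ->.
have e : z1 = z2 by move/card_le1_eqP: Hc; apply; rewrite inE.
subst z2.
have : (j <= z1)%O.
  rewrite -(meet_idPl Hab) meetUr; by rewrite leUx H1 H2.
move: Hz1 => /andP[Hz1 _] H. by move: (lt_le_trans Hz1 H); rewrite ltxx.
Qed.

Lemma jx (d : Order.disp_t) (L : finTBDistrLatticeType d) (x x' : L)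
  (hx : complement_of x x') (j : JL L) : (val j <= x)%O || (val j <= x')%O.
Proof. apply: join_prime; first exact: valP. by case: hx => _ ->; apply: lex1. Qed.

Section Main.
Variables (R : realFieldType) (d : Order.disp_t) (L : finTBDistrLatticeType d) (x x' : L).
Hypothesis hx : complement_of x x'.
Local Open Scope ring_scope.
Local Notation J := (JL L).

Definition sig (j : J) : R := if (val j <= x)%O then 1 else -1.

Lemma normE (g : J -> R) : sign_cond x x' g -> forall j, `|g j| = sig j * g j.
Proof.
case=> H1 H2 j; rewrite /sig; case: ifP => Hj.
  by rewrite mul1r ger0_norm // H1.
have := jx hx j; rewrite Hj /= => Hj'.
by rewrite mulN1r ler0_norm // H2.
Qed.

Lemma D_C (g : J -> R) : in_Dx x x' g -> in_Cx x x' g.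
Proof.
case=> Hv [Ha Hs]; split=> // j; case: (Hv j) => [->|[->|->]]; apply/andP; split;
  rewrite ?lexx ?lerN10 ?ler01 //; exact: (le_trans (lerN10 _) ler01).
Qed.

Lemma hull_C n (s : 'I_n -> J -> R) : (forall i, in_Cx x x' (s i)) ->
  forall f, in_conv_hull s f -> in_Cx x x' f.
Proof.
move=> Hs f [w [w0 [w1 Hf]]].
have Hsg : sign_cond x x' f.
  split=> j Hj; rewrite Hf.
    by apply: sumr_ge0 => i _; apply: mulr_ge0 => //; case: (Hs i) => _ [_ [H _]]; apply: H.
  apply: sumr_le0 => i _; case: (Hs i) => _ [_ [_ H]]; exact: mulr_ge0_le0 (w0 i) (H j Hj).
split; last split => //.
- move=> j; rewrite Hf; apply/andP; split.
    rewrite -w1 -sumrN; apply: ler_sum => i _; rewrite -mulrN1; apply: ler_wpM2l => //.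
    by case/andP: ((Hs i).1 j).
  rewrite -w1; apply: ler_sum => i _; rewrite -{2}(mulr1 (w i)); apply: ler_wpM2l => //.
  by case/andP: ((Hs i).1 j).
- move=> j j' Hjj'; rewrite !(normE Hsg) !Hf !mulr_sumr; apply: ler_sum => i _.
  rewrite (mulrCA (sig j)) (mulrCA (sig j')) -!(normE (Hs i).2.2); apply: ler_wpM2l => //; exact: (Hs i).2.1.
Qed.

Definition real (phi : {ffun J -> 'I_3}) : J -> R := fun j => (phi j)%:R - 1.
Definition sel (phi : {ffun J -> 'I_3}) : J -> R :=
  if excluded_middle_informative (in_Dx x x' (real phi)) then real phi else (fun _ => 0).
Definition ss (i : 'I_#|{ffun J -> 'I_3}|) : J -> R := sel (enum_val i).

Lemma zero_D : in_Dx x x' (fun _ : J => 0 : R).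
Proof. split; first by move=> j; right; left. by split=> [j j' _|]; rewrite ?normr0 //; split. Qed.

Lemma ss_D i : in_Dx x x' (ss i).
Proof. rewrite /ss /sel; case: excluded_middle_informative => // ?; exact: zero_D. Qed.

Lemma ss_C i : in_Cx x x' (ss i).
Proof. exact: D_C (ss_D i). Qed.

Lemma hull_pt i0 : in_conv_hull ss (ss i0).
Proof.
exists (fun i => (i == i0)%:R); split; first by move=> i; apply: ler0n.
split; first by rewrite (bigD1 i0) //= eqxx big1 ?addr0 // => i /negbTE ->.
move=> t; rewrite (bigD1 i0) //= eqxx mul1r big1 ?addr0 // => i /negbTE ->; by rewrite mul0r.
Qed.

Lemma D_hull (g : J -> R) : in_Dx x x' g -> in_conv_hull ss g.
Proof.
move=> Hg.
pose phi : {ffun J -> 'I_3} :=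
  [ffun j => inord (if g j == -1 then 0%N else if g j == 0 then 1%N else 2%N)].
have n1 : ((1 : R) == -1) = false by rewrite gt_eqF // (lt_trans (ltrN10 _) ltr01).
have n2 : ((-1 : R) == 0) = false by rewrite lt_eqF // ltrN10.
have Hr : real phi = g.
  apply: functional_extensionality => j; rewrite /real ffunE.
  have n3 : ((0 : R) == -1) = false by rewrite eq_sym n2.
  case: (Hg.1 j) => [->|[->|->]]; rewrite ?eqxx ?n1 ?n3 ?oner_eq0 inordK //.
  - by rewrite mulr0n sub0r.
  - by rewrite subrr.
  - by rewrite (natrD _ 1 1) addrK.
have Hsel : sel phi = g.
  rewrite /sel; case: excluded_middle_informative => // H; exfalso; apply: H; by rewrite Hr.
have -> : g = ss (enum_rank phi) by rewrite /ss enum_rankK Hsel.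
exact: hull_pt.
Qed.

Lemma hull_conv n (s : 'I_n -> J -> R) (g h : J -> R) (a : R) : in_conv_hull s g -> in_conv_hull s h ->
  0 <= a <= 1 -> in_conv_hull s (fun t => a * g t + (1 - a) * h t).
Proof.
move=> [wg [wg0 [wg1 Hg]]] [wh [wh0 [wh1 Hh]]] /andP[a0 a1].
exists (fun i => a * wg i + (1 - a) * wh i); split; [|split].
- by move=> i; apply: addr_ge0; apply: mulr_ge0 => //; rewrite subr_ge0.
- by rewrite big_split /= -!mulr_sumr wg1 wh1 !mulr1 addrC subrK.
- move=> t; rewrite Hg Hh !mulr_sumr -big_split /=; apply: eq_bigr => i _.
  by rewrite [RHS]mulrDl !mulrA.
Qed.

Lemma sgD (f : J -> R) : in_Cx x x' f -> in_Dx x x' (fun j => Num.sg (f j)).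
Proof.
case=> Hb [Ha [Hs1 Hs2]]; split; [|split; [|split]].
- move=> j; case: (ltrgtP (f j) 0) => H.
  + by left; rewrite ltr0_sg.
  + by right; right; rewrite gtr0_sg.
  + by right; left; rewrite H sgr0.
- move=> j j' Hjj'; rewrite !normr_sg; have := Ha j j' Hjj'.
  case: (f j =P 0) => [->|_].
    rewrite normr0 => H; have -> : f j' = 0 by apply/normr0_eq0/le_anti; rewrite H normr_ge0.
    by rewrite eqxx.
  by case: (f j' != 0) => //= _; rewrite ler01.
- by move=> j Hj; rewrite sgr_ge0; apply: Hs1.
- by move=> j Hj; rewrite sgr_le0; apply: Hs2.
Qed.

Lemma decomp (f : J -> R) : in_Cx x x' f ->
  (forall j, f j = Num.sg (f j)) \/
  exists a (f' : J -> R), [/\ 0 < a < 1, in_Cx x x' f',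
     (forall j, f j = a * Num.sg (f j) + (1 - a) * f' j) &
     (#|[pred j | f' j != 0%R]| < #|[pred j | f j != 0%R]|)%N].
Proof.
move=> Hf; have [Hb [Ha [Hs1 Hs2]]] := Hf.
case: (boolP [exists j, f j != 0]); last first.
  move=> H; left => j; have : f j == 0.
    by move: H; rewrite negb_exists => /forallP/(_ j); rewrite negbK.
  by move/eqP ->; rewrite sgr0.
case/existsP => j1 Hj1.
case: (@arg_minP _ _ _ j1 (fun j => f j != 0) (fun j => `|f j|) Hj1) => j0 Hj0 Hmin.
set a := `|f j0|.
have a0 : 0 < a by rewrite normr_gt0.
have Hle1 : forall j, `|f j| <= 1 by move=> j; rewrite ler_norml; exact: Hb.
have a1 : a <= 1 by apply: Hle1.
have Hge : forall j, f j != 0 -> a <= `|f j| by move=> j /Hmin.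
case: (a =P 1) => [Ea|Na].
  left => j; case: (f j =P 0) => [->|/eqP Hj]; first by rewrite sgr0.
  have Hn : `|f j| = 1 by apply: le_anti; rewrite Hle1 -Ea Hge.
  by rewrite -{1}(mulr_sg_norm (f j)) Hn mulr1.
have a1' : a < 1 by rewrite lt_neqAle a1 andbT; apply/eqP.
have b0 : 0 < 1 - a by rewrite subr_gt0.
have Hq : forall j, f j != 0 -> 0 <= (`|f j| - a) / (1 - a) <= 1.
  move=> j Hj; rewrite divr_ge0 ?subr_ge0 ?Hge ?a1 //= ler_pdivrMr // mul1r.
  exact: lerB (Hle1 j) (lexx a).
right; exists a, (fun j => Num.sg (f j) * ((`|f j| - a) / (1 - a))); split.
- by rewrite a0 a1'.
- split; [|split].
  + move=> j; rewrite -ler_norml normrM normr_sg; case: (f j =P 0) => [->|/eqP Hj].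
      by rewrite mul0r ler01.
    rewrite mul1r ger0_norm; by case/andP: (Hq j Hj).
  + move=> j j' Hjj'; rewrite !(normrM (Num.sg _)) !normr_sg.
    case: (f j' =P 0) => [->|/eqP Hj'].
      by rewrite mul0r; apply: mulr_ge0; rewrite ?ler0n ?normr_ge0.
    have Hj : f j != 0.
      by rewrite -normr_gt0 (lt_le_trans _ (Ha _ _ Hjj')) // normr_gt0.
    have [q0 _] := andP (Hq _ Hj); have [q0' _] := andP (Hq _ Hj').
    rewrite Hj !mul1r (ger0_norm q0) (ger0_norm q0').
    apply: ler_wpM2r; first by rewrite invr_ge0 ltW.
    by rewrite lerD2r; apply: Ha.
  + split=> j Hj; case: (f j =P 0) => [->|/eqP Hf0]; rewrite ?sgr0 ?mul0r //.
      by apply: mulr_ge0; [rewrite sgr_ge0; apply: Hs1 | case/andP: (Hq _ Hf0)].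
    by apply: mulr_le0_ge0; [rewrite sgr_le0; apply: Hs2 | case/andP: (Hq _ Hf0)].
- move=> j; rewrite mulrCA [(1 - a) * (_ / _)]mulrC divfK ?lt0r_neq0 //.
  by rewrite [a * _]mulrC -mulrDr (addrC a) subrK mulr_sg_norm.
- apply: proper_card; apply/properP; split.
    apply/subsetP => j; rewrite !inE; apply: contra => /eqP ->; by rewrite sgr0 mul0r.
  by exists j0; rewrite !inE // /a subrr mul0r mulr0 eqxx.
Qed.

Lemma conv0 (t p q : R) : 0 < t < 1 -> 0 <= p -> 0 <= q ->
  t * p + (1 - t) * q = 0 -> p = 0 /\ q = 0.
Proof.
case/andP=> t0 t1 p0 q0 /eqP; have t1' : 0 < 1 - t by rewrite subr_gt0.
rewrite paddr_eq0; [|exact: mulr_ge0 (ltW t0) p0|exact: mulr_ge0 (ltW t1') q0]; move=> /andP[].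
by rewrite !mulf_eq0 (gt_eqF t0) (gt_eqF t1') /= => /eqP -> /eqP ->.
Qed.

Lemma part1 (f : J -> R) : in_Cx x x' f <-> in_conv_hull ss f.
Proof.
split; last by move=> H; apply: (@hull_C _ ss ss_C f H).
move: (leqnn #|[pred j | f j != 0%R]|); move: {2}#|[pred j | f j != 0%R]| => m.
elim: m f => [|m IH] f Hm Hf; case: (decomp Hf) => [Hs|[a [f' [Ha Hf' Heq Hc]]]].
- have -> : f = (fun j => Num.sg (f j)) by apply: functional_extensionality.
  by apply: D_hull; apply: sgD.
- by have := leq_trans Hc Hm.
- have -> : f = (fun j => Num.sg (f j)) by apply: functional_extensionality.
  by apply: D_hull; apply: sgD.
- have -> : f = (fun t => a * Num.sg (f t) + (1 - a) * f' t)
    by apply: functional_extensionality.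
  case/andP: Ha => a0 a1.
  apply: hull_conv; [by apply: D_hull; apply: sgD | apply: IH => // | by rewrite ltW ?ltW].
  by rewrite -ltnS; apply: leq_trans Hc Hm.
Qed.

Lemma part2 (f : J -> R) : extreme_point (fun h : J -> R => in_Cx x x' h) f <-> in_Dx x x' f.
Proof.
split.
  case=> Hf Hext; case: (decomp Hf) => [Hs|[a [f' [Ha Hf' Heq _]]]].
    have -> : f = (fun j => Num.sg (f j)) by apply: functional_extensionality.
    exact: sgD.
  have E := Hext _ _ _ (D_C (sgD Hf)) Hf' Ha Heq.
  have -> : f = (fun j => Num.sg (f j)) by apply: functional_extensionality => u; rewrite (E u).1.
  exact: sgD.
move=> Hg; split; first exact: D_C.
move=> g1 h1 t Hg1 Hh1 Ht Heq u.
have [b1 _] := Hg1; have [b2 _] := Hh1.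
case/andP: (b1 u) => g1l g1u; case/andP: (b2 u) => h1l h1u.
case: (Hg.1 u) => Hu.
- have E : t * (g1 u + 1) + (1 - t) * (h1 u + 1) = 0.
    by rewrite !mulrDr !mulr1 addrACA -Heq Hu [t + _]addrC subrK addNr.
  have p0 : 0 <= g1 u + 1 by rewrite -(lerD2r 1) addNr in g1l.
  have q0 : 0 <= h1 u + 1 by rewrite -(lerD2r 1) addNr in h1l.
  case: (conv0 Ht p0 q0 E) => /eqP Ep /eqP Eq.
  by rewrite Hu; move: Ep Eq; rewrite !addr_eq0 => /eqP -> /eqP ->.
case: Hu => Hu.
- have [Hsx Hsx'] := Hg1.2.2; have [Hhx Hhx'] := Hh1.2.2.
  case/orP: (jx hx u) => Hj.
    have := conv0 Ht (Hsx _ Hj) (Hhx _ Hj); rewrite -Heq Hu => /(_ erefl) [-> ->]; done.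
  have : t * (- g1 u) + (1 - t) * (- h1 u) = 0 by rewrite !mulrN -opprD -Heq Hu oppr0.
  move/(conv0 Ht); rewrite !oppr_ge0 => /(_ (Hsx' _ Hj) (Hhx' _ Hj)) [/eqP].
  by rewrite oppr_eq0 Hu => /eqP -> /eqP; rewrite oppr_eq0 => /eqP ->.
- have : t * (1 - g1 u) + (1 - t) * (1 - h1 u) = 0.
    by rewrite !mulrBr !mulr1 addrACA -opprD -Heq Hu [t + _]addrC subrK subrr.
  move/(conv0 Ht); rewrite !subr_ge0 => /(_ g1u h1u) [/eqP].
  by rewrite subr_eq0 Hu => /eqP <- /eqP; rewrite subr_eq0 => /eqP <-.
Qed.

End Main.

Theorem mainTheorem5 (R : realFieldType) (d : Order.disp_t)
  (L : finTBDistrLatticeType d) (x x' : L) (hx : complement_of x x') :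
  is_convex_polytope (fun g : JL L -> R => in_Cx x x' g) /\
  (forall g : JL L -> R,
     extreme_point (fun h : JL L -> R => in_Cx x x' h) g <-> in_Dx x x' g).
Proof.
split; last exact: part2.
by exists _, (@ss R d L x x') => f; apply: part1.
Qed.
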